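(* Let $D$ be a digraph and $(P,\mathrm{org})$ a valid DAG-depth decomposition of $D$ of depth $k$. Then every cop strategy based on $(P,\mathrm{org})$ is a winning strategy in the lift-free cops-and-robber game on $D$ that uses at most $k$ cops.
   Context: A DAG-depth decomposition of a digraph $D$ is a pair $(P,\mathrm{org})$ where $P$ is a directed acyclic graph and $\mathrm{org}:V(P)\to V(D)$ is surjective; $x'\in V(P)$ is called a copy of $\mathrm{org}(x')$. In $P$, roots are vertices of indegree $0$; $w'$ is a descendant of $v'$ if $P$ contains a directed path from $v'$ to $w'$. The depth of $P$ is the maximum number of vertices on a directed path in $P$. The decomposition is valid if for every $v'\in V(P)$ with $\mathrm{org}(v')=v$ and every $u\in N^+_D(v)$, either (1) there is $u'$ with $\mathrm{org}(u')=u$ that is a descendant of $v'$ in $P$, or (2) every directed path in $P$ from any root of $P$ to $v'$ contains a vertex $u'$ with $\mathrm{org}(u')=u$. Lift-free cops-and-robber game on $D$: the robber occupies a vertex, chosen at the start, and knows the cops' positions; the cop player knows the robber's position. In each turn the cop player announces a vertex where a new cop will be placed; before the cop lands the robber may move arbitrarily far along directed paths of $D$ avoiding vertices occupied by cops. Placed cops never move. The robber is caught when a cop is placed on his current vertex. A strategy based on $(P,\mathrm{org})$: each cop move is made ''because of'' a vertex $x'\in V(P)$, meaning the cop is placed on $\mathrm{org}(x')$ unless that vertex already holds a cop, in which case no new cop is placed. The sequence $x'_1,x'_2,\dots$ of vertices of $P$ must satisfy: (i) $x'_1$ is a root of $P$ and each $x'_{i+1}$ is an out-neighbor of $x'_i$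 in $P$; (ii) among the candidates allowed by (i), the chosen one must have in $P$ a directed path to some copy of the robber's current position. *)

(* Defs.v *)
From mathcomp Require Import all_boot.
Set Implicit Arguments. Unset Strict Implicit. Unset Printing Implicit Defensive.

Definition is_root (W : finType) (eP : rel W) (x : W) : bool :=
  [forall y, ~~ eP y x].

Definition acyclic (W : finType) (eP : rel W) : Prop :=
  forall x y, eP x y -> ~~ connect eP y x.

(* A directed path in P is a sequence x :: p with [path eP x p];
   it has [size (x :: p)] vertices.  depth of P = max number of vertices on
   a directed path (0 if P is empty). *)
Definition depth_is (W : finType) (eP : rel W) (k : nat) : Prop :=
  (forall x p, path eP x p -> size (x :: p) <= k) /\
  (k = 0 \/ exists x p, path eP x p /\ size (x :: p) = k).

Definition dag_decomposition (V W : finType) (eP : rel W) (org : W -> V) : Prop :=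
  acyclic eP /\ (forall v, exists x, org x = v).

Definition valid_decomposition (V W : finType) (eD : rel V) (eP : rel W)
    (org : W -> V) : Prop :=
  dag_decomposition eP org /\
  forall (v' : W) (u : V), eD (org v') u ->
    (exists u', org u' = u /\ connect eP v' u') \/
    (forall (r : W) (p : seq W), is_root eP r -> path eP r p -> last r p = v' ->
        has (fun y => org y == u) (r :: p)).

(* A play is described by the sequence [xs] = x'_1, ..., x'_n of vertices of P
   because of which the cop moves are made, and the sequence
   [rs] = r_0, r_1, ..., r_n of robber positions: r_0 is the start vertex and
   r_i the robber's vertex when the i-th cop lands.  *)

Definition cops_after (V W : finType) (org : W -> V) (xs : seq W) (j : nat)
  : {set V} := [set v | v \in map org (take j xs)].

Definition robber_move (V : finType) (eD : rel V) (C : {set V}) (a b : V) : Prop :=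
  exists p : seq V,
    [/\ path eD a p, last a p = b & all (fun v => v \notin C) (a :: p)].

Definition strategy_choice (V W : finType) (eP : rel W) (org : W -> V)
    (prev : seq W) (r : V) (x : W) : Prop :=
  (if prev is [::] then is_root eP x else eP (last x prev) x) /\
  (exists y, connect eP x y /\ org y = r).

(* (xs, rs) is a play of the game in which the cops follow a strategy based on
   (P, org), and the robber was not caught before the last round. *)
Definition strategy_play (V W : finType) (eD : rel V) (eP : rel W)
    (org : W -> V) (xs : seq W) (rs : seq V) : Prop :=
  size rs = (size xs).+1 /\
  forall (i : nat) (x0 : W) (r0 : V), i < size xs ->
    [/\ nth r0 rs i \notin cops_after org xs i,
        strategy_choice eP org (take i xs) (nth r0 rs i) (nth x0 xs i) &
        robber_move eD (cops_after org xs i) (nth r0 rs i) (nth r0 rs i.+1)].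

(* Main.v *)
Require Import Defs.
From mathcomp Require Import all_boot.

Lemma root_above (W : finType) (eP : rel W) :
  acyclic eP -> forall y, exists r, is_root eP r /\ connect eP r y.
Proof.
move=> Hac y.
case: (@arg_minnP _ y (fun z => connect eP z y) (fun z => #|[set w | connect eP w z]|) (connect0 eP y)) => z Pz Hmin.
exists z; split=> //.
apply/forallP => w; apply/negP => ew.
have Hw : connect eP w y by apply: connect_trans (connect1 ew) Pz.
have := Hmin w Hw; rewrite leqNgt => /negP; apply.
apply: proper_card; apply/properP; split.
  apply/subsetP => v; rewrite !inE => vw. exact: connect_trans vw (connect1 ew).
exists z; first by rewrite inE connect0.
rewrite inE; exact: Hac.
Qed.

Lemma cops_in (V W : finType) (org : W -> V) (xs : seq W) v :
  v \in cops_after org xs (size xs) -> exists2 y, y \in xs & org y = v.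
Proof.
rewrite inE take_size => /mapP [y yin ->]; by exists y.
Qed.

Lemma play_path (V W : finType) (eD : rel V) (eP : rel W) (org : W -> V) r t rs :
  strategy_play eD eP org (r :: t) rs -> is_root eP r /\ path eP r t.
Proof.
move=> [_ H]; split.
  by have [_ [] //] := H 0 r (org r) (ltn0Sn _).
apply/(pathP r) => i ilt.
have [_ [] /= + _ _] := H i.+1 r (org r) ilt.
rewrite (last_nth r) size_takel ?(ltnW ilt) //.
by rewrite -/(take i.+1 (r :: t)) nth_take.
Qed.

Lemma cops_last (V W : finType) (org : W -> V) r t v :
  v \in cops_after org (r :: t) (size (r :: t)) ->
  v \in cops_after org (r :: t) (size t) \/ v = org (last r t).
Proof.
move=> Hv.
have Ht : take (size t) (r :: t) = belast r t.
  by rewrite [r :: t]lastI -cats1 -(size_belast r t) take_size_cat.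
have: v \in map org (belast r t ++ [:: last r t]).
  by rewrite cats1 -lastI; move: Hv; rewrite inE take_oversize.
rewrite map_cat mem_cat => /orP [Hb|].
  by left; rewrite /cops_after in_set Ht.
by rewrite inE => /eqP; right.
Qed.

Theorem theorem3p3 (V W : finType) (eD : rel V) (eP : rel W) (org : W -> V)
    (k : nat) :
  valid_decomposition eD eP org -> depth_is eP k ->
  forall (xs : seq W) (rs : seq V), strategy_play eD eP org xs rs ->
    #|cops_after org xs (size xs)| <= k /\
    (forall r0 : V, nth r0 rs (size xs) \notin cops_after org xs (size xs) ->
       size xs < k /\
       exists x : W, strategy_choice eP org xs (nth r0 rs (size xs)) x).
Proof.
move=> [[Hac Hsurj] Hval] [Hdep _] xs rs Hplay.
have Hszk : size xs <= k.
  case: xs Hplay => [|r t] Hplay //.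
  have [_ Hp] := @play_path _ _ _ _ _ r t _ Hplay; exact: Hdep Hp.
split.
  apply: leq_trans Hszk.
  rewrite /cops_after cardsE take_oversize //.
  apply: leq_trans (card_size (map org xs)) _; by rewrite size_map.
move=> r0 Hnot.
suff [x Hx] : exists x : W, strategy_choice eP org xs (nth r0 rs (size xs)) x.
  split; last by exists x.
  case: xs Hplay Hnot Hx Hszk => [|r t] Hplay Hnot [Hx _] Hszk.
    exact: (Hdep x [::]).
  have [_ Hp] := @play_path _ _ _ _ _ r t _ Hplay.
  have := Hdep r (rcons t x); rewrite rcons_path Hp Hx /= size_rcons; exact.
have [Hsz H] := Hplay.
case: xs Hplay Hnot H Hsz Hszk => [|r t] Hplay Hnot H Hsz Hszk.
  have [y oy] := Hsurj (nth r0 rs 0).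
  have [z [rz cz]] := @root_above _ _ Hac y.
  by exists z; split => //; exists y.
have [Hroot Hp] := @play_path _ _ _ _ _ r t _ Hplay.
set x := last r t.
set C := cops_after org (r :: t).
have Ex : nth r (r :: t) (size t) = x := nth_last r (r :: t).
have [_ [_ [y [cy oy]]] [p [pp lp allp]]] := H (size t) r r0 (ltnSn _).
rewrite Ex in cy.
set below := fun v => exists y, connect eP x y /\ org y = v.
have step : forall a b, below a -> eD a b -> b \notin C (size t) -> below b.
  move=> a b [y1 [cy1 oy1]] eab Hb.
  case: (boolP (b \in C (size (r :: t)))) => Hb2.
    case: (@cops_last _ _ _ _ _ _ Hb2) => [Hc|->]; first by rewrite Hc in Hb.
    by exists x; split.
  have : eD (org y1) b by rewrite oy1.
  case/Hval => [[u' [ou cu]]|Hall].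
    exists u'; split => //; exact: connect_trans cy1 cu.
  have [q pq ly] := connectP cy1.
  have := Hall r (t ++ q) Hroot.
  rewrite cat_path Hp -/x pq last_cat -/x -ly => /(_ isT erefl).
  rewrite -cat_cons has_cat => /orP [|] /hasP [y2 y2in /eqP oy2].
    move: Hb2; rewrite /C /cops_after inE take_oversize // => /negP; case.
    by apply/mapP; exists y2.
  exists y2; split => //; apply: (path_connect pq); by rewrite inE y2in orbT.
have Hbel : forall q a, below a -> path eD a q ->
    all (fun v => v \notin C (size t)) q -> below (last a q).
  elim => [|b q IH] a Ha //= /andP [eab pq] /andP [Hb Hq].
  apply: IH Hq => //; exact: step eab Hb.
have : below (last (nth r0 rs (size t)) p).
  apply: Hbel pp _; first by exists y.
  by move: allp => /= /andP [].
rewrite lp => [[y' [cy' oy']]].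
have ny' : y' != x.
  apply/eqP => E; move: Hnot; rewrite -oy' E /C /cops_after inE take_oversize //.
  by rewrite map_f // mem_last.
have [q pq ly] := connectP cy'.
case: q pq ly => [|z q] /= ; first by move=> _ E; rewrite E eqxx in ny'.
move=> /andP [exz pzq] ly.
exists z; split => //=.
exists y'; split => //; rewrite ly; apply: (path_connect pzq); exact: mem_last.
Qed.
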